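(* Let $X_{\mathcal M}$ and $Y_{\mathcal M}$ be independent multiterminal sources on $\mathcal M$, and let $Z_{\mathcal M}$ be the clubbed source, $Z_i=(X_i,Y_i)$ for $i\in\mathcal M$. Then $$\mathbf I(Z_{\mathcal M})\ge\mathbf I(X_{\mathcal M})+\mathbf I(Y_{\mathcal M}),$$ with equality if and only if $\Pi^*_X\cap\Pi^*_Y\ne\emptyset$.
   Context: Let $\mathcal M=\{1,\dots,m\}$, $m\ge2$. A source $W_{\mathcal M}=(W_1,\dots,W_m)$ is a tuple of jointly distributed finite-valued random variables, and $W_A=(W_i:i\in A)$. The sources $X_{\mathcal M}$ and $Y_{\mathcal M}$ being independent means the tuple $X_{\mathcal M}$ is independent of the tuple $Y_{\mathcal M}$. For a partition $\mathcal P$ of $\mathcal M$ with $|\mathcal P|\ge2$, $\Delta_W(\mathcal P)=\frac1{|\mathcal P|-1}[\sum_{A\in\mathcal P}H(W_A)-H(W_{\mathcal M})]$, and $\mathbf I(W_{\mathcal M})=\min_{\mathcal P}\Delta_W(\mathcal P)$. $\Pi^*_X$ (resp. $\Pi^*_Y$) is the set of partitions attaining the minimum for $X_{\mathcal M}$ (resp. $Y_{\mathcal M}$). *)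

(* Defs.v *)
From mathcomp Require Import all_boot.
From Stdlib Require Import Reals.
Set Implicit Arguments. Unset Strict Implicit. Unset Printing Implicit Defensive.

Definition is_prob (Omega : finType) (P : Omega -> R) : Prop :=
  (forall w, (0 <= P w)%R) /\ \big[Rplus/0%R]_(w : Omega) P w = 1%R.

Definition prob (Omega : finType) (P : Omega -> R) (E : pred Omega) : R :=
  \big[Rplus/0%R]_(w : Omega | E w) P w.

Section Source.
Variables (m : nat) (Omega : finType) (P : Omega -> R).
Variables (T : 'I_m -> eqType) (W : forall i : 'I_m, Omega -> T i).

Definition same_on (A : {set 'I_m}) (w w' : Omega) : bool :=
  [forall i in A, W i w == W i w'].

Definition entropy (A : {set 'I_m}) : R :=
  (- \big[Rplus/0%R]_(w : Omega) (P w * ln (prob P (same_on A w))))%R.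

Definition Delta (Pt : {set {set 'I_m}}) : R :=
  ((\big[Rplus/0%R]_(A in Pt) entropy A - entropy setT)
     / INR (#|Pt| - 1))%R.

End Source.

Definition valid_partition (m : nat) (Pt : {set {set 'I_m}}) : bool :=
  partition Pt [set: 'I_m] && (1 < #|Pt|).

Definition singletons (m : nat) : {set {set 'I_m}} := [set [set i] | i : 'I_m].

Definition MMI (m : nat) (Omega : finType) (P : Omega -> R)
  (T : 'I_m -> eqType) (W : forall i : 'I_m, Omega -> T i) : R :=
  \big[Rmin/Delta P W (singletons m)]_(Pt | valid_partition Pt) Delta P W Pt.

Definition optimal_partition (m : nat) (Omega : finType) (P : Omega -> R)
  (T : 'I_m -> eqType) (W : forall i : 'I_m, Omega -> T i)
  (Pt : {set {set 'I_m}}) : Prop :=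
  valid_partition Pt /\ Delta P W Pt = MMI P W.

Definition independent (m : nat) (Omega : finType) (P : Omega -> R)
  (TX TY : 'I_m -> eqType)
  (X : forall i : 'I_m, Omega -> TX i) (Y : forall i : 'I_m, Omega -> TY i) : Prop :=
  forall w1 w2 : Omega,
    prob P (fun w => same_on X setT w1 w && same_on Y setT w2 w) =
    (prob P (same_on X setT w1) * prob P (same_on Y setT w2))%R.

Definition club (m : nat) (Omega : finType)
  (TX TY : 'I_m -> eqType)
  (X : forall i : 'I_m, Omega -> TX i) (Y : forall i : 'I_m, Omega -> TY i) :
  forall i : 'I_m, Omega -> (TX i * TY i)%type :=
  fun i w => (X i w, Y i w).

(* Main.v *)
Require Import Defs.
From HB Require Import structures.
From mathcomp Require Import all_boot.
From Stdlib Require Import Reals Lra.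
Set Implicit Arguments. Unset Strict Implicit. Unset Printing Implicit Defensive.

HB.instance Definition _ := Monoid.isComLaw.Build R 0%R Rplus (fun x y z => esym (Rplus_assoc x y z)) Rplus_comm Rplus_0_l.
HB.instance Definition _ := Monoid.isComLaw.Build R 1%R Rmult (fun x y z => esym (Rmult_assoc x y z)) Rmult_comm Rmult_1_l.
HB.instance Definition _ := Monoid.isMulLaw.Build R 0%R Rmult Rmult_0_l Rmult_0_r.
HB.instance Definition _ := Monoid.isAddLaw.Build R Rmult Rplus Rmult_plus_distr_r Rmult_plus_distr_l.

Local Open Scope R_scope.
Section S.
Variables (Omega : finType) (P : Omega -> R).
Hypothesis HP : is_prob P.

Lemma P_ge0 w : (0 <= P w)%R. Proof. by case: HP. Qed.

Lemma prob_ge0 (E : pred Omega) : (0 <= prob P E)%R.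
Proof. apply: big_ind => //; [lra | move=> x y; lra | move=> i _; exact: P_ge0]. Qed.

Lemma prob_ge_pt (E : pred Omega) w : E w -> (P w <= prob P E)%R.
Proof.
move=> Ew; rewrite /prob (bigD1 w) //=.
have : (0 <= \big[Rplus/0%R]_(i | E i && (i != w)) P i)%R.
  apply: big_ind => //; [lra | move=> x y; lra | move=> i _; exact: P_ge0].
lra.
Qed.

Variable S : Omega -> Omega -> bool.
Hypothesis Srefl : forall w, S w w.
Hypothesis Ssym : forall w w', S w w' -> S w' w.
Hypothesis Strans : forall w1 w2 w3, S w1 w2 -> S w2 w3 -> S w1 w3.

Definition pS w := prob P (S w).

Lemma pS_eq w w' : S w w' -> pS w = pS w'.
Proof.
move=> h; rewrite /pS /prob; apply: eq_bigl => x.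
apply/idP/idP => [|]; [apply: Strans; exact: Ssym | exact: Strans].
Qed.

Lemma div_cancel w : (P w / pS w * pS w = P w)%R.
Proof.
have h := prob_ge_pt (Srefl w); have h0 := P_ge0 w.
case: (Req_dec (pS w) 0) => [e|ne].
  rewrite /pS in e; have -> : P w = 0%R by lra. by rewrite /Rdiv !Rmult_0_l.
by field.
Qed.

Lemma class_sum (g : Omega -> R) :
  \big[Rplus/0%R]_w (g w * P w) =
  \big[Rplus/0%R]_w1 (P w1 / pS w1 * \big[Rplus/0%R]_(w | S w1 w) (g w * P w)).
Proof.
under [RHS]eq_bigr => w1 _ do rewrite big_distrr /=.
rewrite (exchange_big_dep predT) //=.
apply: eq_bigr => w _.
rewrite -big_distrl /=.
transitivity (g w * P w * (\big[Rplus/0%R]_(i | S i w) P i / pS w))%R.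
  have h := prob_ge_pt (Srefl w); have h0 := P_ge0 w.
  case: (Req_dec (pS w) 0) => [e|ne].
    rewrite /pS in e; have -> : P w = 0%R by lra. by rewrite !Rmult_0_r Rmult_0_l.
  have -> : \big[Rplus/0%R]_(i | S i w) P i = pS w.
    rewrite /pS /prob; apply: eq_bigl => x; apply/idP/idP; exact: Ssym.
  by field.
rewrite [RHS]Rmult_comm /Rdiv big_distrl /=; congr Rmult.
apply: eq_bigr => i hi; by rewrite (pS_eq hi).
Qed.

Lemma prob_split (E F : pred Omega) :
  (forall w w', S w w' -> E w = E w') ->
  prob P (fun w => E w && F w) =
  \big[Rplus/0%R]_w1 (if E w1 then P w1 / pS w1 * prob P (fun w => S w1 w && F w) else 0)%R.
Proof.
move=> Einv.
have -> : prob P (fun w => E w && F w) =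
  \big[Rplus/0%R]_w ((if E w && F w then 1 else 0) * P w)%R.
  rewrite /prob big_mkcond; apply: eq_bigr => w _; case: ifP => _; lra.
rewrite class_sum; apply: eq_bigr => w1 _.
case: ifP => Ew1.
  congr Rmult; rewrite /prob big_mkcondr; apply: eq_bigr => w h.
  by rewrite -(Einv _ _ h) Ew1 /=; case: ifP => _ ; lra.
rewrite big1 ?Rmult_0_r // => w h; by rewrite -(Einv _ _ h) Ew1 /= Rmult_0_l.
Qed.

End S.
Section Indep.
Variables (m : nat) (Omega : finType) (P : Omega -> R).
Hypothesis HP : is_prob P.

Section SO.
Variables (T : 'I_m -> eqType) (W : forall i : 'I_m, Omega -> T i).
Lemma so_refl A w : same_on W A w w.
Proof. by apply/forall_inP => i _. Qed.
Lemma so_sym A w w' : same_on W A w w' -> same_on W A w' w.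
Proof. by move/forall_inP=> h; apply/forall_inP => i /h; rewrite eq_sym. Qed.
Lemma so_trans A w1 w2 w3 : same_on W A w1 w2 -> same_on W A w2 w3 -> same_on W A w1 w3.
Proof. move/forall_inP=> h1 /forall_inP h2; apply/forall_inP => i hi.
by rewrite (eqP (h1 i hi)) (h2 i hi). Qed.
Lemma so_sub (A B : {set 'I_m}) w w' : A \subset B -> same_on W B w w' -> same_on W A w w'.
Proof. move/subsetP=> s /forall_inP h; apply/forall_inP => i /s; exact: h. Qed.
End SO.

Variables (TX TY : 'I_m -> eqType)
  (X : forall i : 'I_m, Omega -> TX i) (Y : forall i : 'I_m, Omega -> TY i).
Hypothesis Hind : independent P X Y.

Lemma indep_events (E F : pred Omega) :
  (forall w w', same_on X setT w w' -> E w = E w') ->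
  (forall w w', same_on Y setT w w' -> F w = F w') ->
  prob P (fun w => E w && F w) = prob P E * prob P F.
Proof.
move=> EI FI.
have sX := (@so_refl TX X setT); have sX2 := (@so_sym TX X setT); have sX3 := (@so_trans TX X setT).
have sY := (@so_refl TY Y setT); have sY2 := (@so_sym TY Y setT); have sY3 := (@so_trans TY Y setT).
rewrite (prob_split HP sX sX2 sX3 _ EI).
have inner : forall w1, prob P (fun w => same_on X setT w1 w && F w) =
    pS P (same_on X setT) w1 * prob P F.
  move=> w1.
  have -> : prob P (fun w => same_on X setT w1 w && F w) = prob P (fun w => F w && same_on X setT w1 w).
    by apply: eq_bigl => w; rewrite andbC.
  rewrite (prob_split HP sY sY2 sY3 _ FI).
  rewrite /prob [in RHS]big_mkcond big_distrr /=; apply: eq_bigr => w2 _.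
  case: ifP => _; last by rewrite Rmult_0_r.
  have -> : \big[Rplus/0]_(i | same_on Y setT w2 i && same_on X setT w1 i) P i =
     prob P (same_on X setT w1) * prob P (same_on Y setT w2).
    rewrite -Hind; apply: eq_bigl => w; by rewrite andbC.
  have := div_cancel HP sY w2; rewrite /pS => h.
  rewrite /pS; set a := prob P _ in h *; set b := prob P _; rewrite -[in RHS]h; ring.
rewrite [in RHS]/prob [in RHS]big_mkcond big_distrl /=; apply: eq_bigr => w1 _.
case: ifP => _; last by rewrite Rmult_0_l.
rewrite inner; have := div_cancel HP sX w1; rewrite /pS => h; rewrite /pS.
set a := prob P _ in h *; rewrite -[in RHS]h /prob; ring.
Qed.
End Indep.
Section Ent.
Variables (m : nat) (Omega : finType) (P : Omega -> R).
Hypothesis HP : is_prob P.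
Variables (TX TY : 'I_m -> eqType)
  (X : forall i : 'I_m, Omega -> TX i) (Y : forall i : 'I_m, Omega -> TY i).
Hypothesis Hind : independent P X Y.

Lemma same_on_club A w w' :
  same_on (club X Y) A w w' = same_on X A w w' && same_on Y A w w'.
Proof.
rewrite /same_on /club; apply/forall_inP/andP => [h|[/forall_inP h1 /forall_inP h2] i hi].
  split; apply/forall_inP => i hi; have := h i hi; by rewrite xpair_eqE => /andP[].
by rewrite xpair_eqE h1 ?h2.
Qed.

Lemma prob_club A w :
  prob P (same_on (club X Y) A w) = prob P (same_on X A w) * prob P (same_on Y A w).
Proof.
rewrite -(indep_events HP Hind).
- by apply: eq_bigl => w'; rewrite same_on_club.
- move=> w1 w2 h /=; apply/idP/idP => h'.
    exact: (so_trans h' (so_sub (subsetT A) h)).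
  exact: (so_trans h' (so_sub (subsetT A) (so_sym h))).
- move=> w1 w2 h /=; apply/idP/idP => h'.
    exact: (so_trans h' (so_sub (subsetT A) h)).
  exact: (so_trans h' (so_sub (subsetT A) (so_sym h))).
Qed.

Lemma entropy_club A :
  entropy P (club X Y) A = entropy P X A + entropy P Y A.
Proof.
rewrite /entropy -Ropp_plus_distr; congr Ropp; rewrite -big_split /=.
apply: eq_bigr => w _; rewrite prob_club.
have h0 := P_ge0 HP w.
case: (Req_dec (P w) 0) => [->|ne]; first ring.
have h1 := prob_ge_pt HP (so_refl X A w).
have h2 := prob_ge_pt HP (so_refl Y A w).
rewrite ln_mult; [ring | lra | lra].
Qed.

Lemma Delta_club Pt :
  Defs.Delta P (club X Y) Pt = Defs.Delta P X Pt + Defs.Delta P Y Pt.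
Proof.
rewrite /Defs.Delta entropy_club.
under eq_bigr => A _ do rewrite entropy_club.
rewrite big_split /Rdiv /=; ring.
Qed.
End Ent.
Lemma bigmin_le (I : finType) (p : pred I) (F : I -> R) x0 j :
  p j -> \big[Rmin/x0]_(i | p i) F i <= F j.
Proof.
move=> pj; have : j \in index_enum I by rewrite mem_index_enum.
elim: (index_enum I) => [|a s IH] //; rewrite in_cons big_cons.
case/orP => [/eqP <-|/IH h]; first by rewrite pj; apply: Rmin_l.
case: ifP => _ //; have := Rmin_r (F a) (\big[Rmin/x0]_(i <- s | p i) F i); lra.
Qed.

Lemma bigmin_attained (I : finType) (p : pred I) (F : I -> R) x0 :
  let v := \big[Rmin/x0]_(i | p i) F i in v = x0 \/ exists j, p j /\ v = F j.
Proof.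
apply: (big_ind (fun v => v = x0 \/ exists j, p j /\ v = F j)); first by left.
  move=> x y hx hy; rewrite /Rmin; case: Rle_dec => _ //.
by move=> i pi; right; exists i.
Qed.

Lemma singletons_valid (m : nat) : (2 <= m)%nat -> valid_partition (singletons m).
Proof.
move=> hm; rewrite /valid_partition; apply/andP; split.
  apply/and3P; split.
  - apply/eqP/setP => i; rewrite in_setT; apply/bigcupP; exists [set i].
      by apply/imsetP; exists i.
    by rewrite in_set1.
  - apply/trivIsetP => A B /imsetP[i _ ->] /imsetP[j _ ->] ne.
    rewrite disjoints1 in_set1; apply: contra ne => /eqP ->; by [].
  - apply/imsetP => -[i _] /eqP; rewrite eq_sym; apply/negP; apply/set0Pn; exists i; exact: set11.
rewrite /singletons card_imset ?card_ord //; exact: set1_inj.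
Qed.

Section MinSpec.
Variables (m : nat) (hm : (2 <= m)%nat) (Omega : finType) (P : Omega -> R)
  (T : 'I_m -> eqType) (W : forall i : 'I_m, Omega -> T i).
Lemma MMI_le Pt : valid_partition Pt -> MMI P W <= Defs.Delta P W Pt.
Proof. exact: bigmin_le. Qed.
Lemma MMI_att : exists Pt, valid_partition Pt /\ MMI P W = Defs.Delta P W Pt.
Proof.
case: (bigmin_attained (fun Pt => valid_partition Pt) (Defs.Delta P W) (Defs.Delta P W (singletons m))).
  move=> h; exists (singletons m); split; [exact: singletons_valid | exact: h].
by case=> Pt [h1 h2]; exists Pt.
Qed.
End MinSpec.

Close Scope R_scope.
Theorem proposition3 (m : nat) (hm : (2 <= m)%N) (Omega : finType) (P : Omega -> R)
  (TX TY : 'I_m -> finType)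
  (X : forall i : 'I_m, Omega -> TX i) (Y : forall i : 'I_m, Omega -> TY i) :
  is_prob P -> independent P X Y ->
  (MMI P X + MMI P Y <= MMI P (club X Y))%R /\
  (MMI P (club X Y) = (MMI P X + MMI P Y)%R <->
     exists Pt, optimal_partition P X Pt /\ optimal_partition P Y Pt).
Proof.
move=> HP Hind.
have [Pt0 [v0 e0]] := MMI_att hm P (club X Y).
rewrite (Delta_club HP Hind) in e0.
have h1 := MMI_le P X v0; have h2 := MMI_le P Y v0.
split; first lra.
split.
  move=> e; exists Pt0; split; split => //; lra.
case=> Pt [[v1 e1] [_ e2]].
have := MMI_le P (club X Y) v1; rewrite (Delta_club HP Hind); lra.
Qed.
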